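(* Assume $\delta<d$ and $\gamma\ge1$. Then $$\frac{q(z,w)}{z^\gamma w^d}\longrightarrow 1\quad\text{as } |z|\to\infty \text{ and } |w|/|z|^\alpha\to\infty,$$ and there is $R_0>0$ such that for every $R\ge R_0$ the set $W_R=\{(z,w):|z|>R,\ |w|>R|z|^\alpha\}$ satisfies $f(W_R)\subset W_R$.
   Context: Let $p(z)=z^\delta+O(z^{\delta-1})$ be a monic polynomial of degree $\delta\ge 2$, and let $q(z,w)=b(z)w^d+(\text{terms of lower degree in } w)$ be a polynomial with $d=\deg_w q\ge 2$, where $b$ is a monic polynomial of degree $\gamma$. Let $f(z,w)=(p(z),q(z,w))$. For $\delta<d$, define the rational number (possibly negative) $$\alpha=\max\Big(\Big\{\frac{-\gamma}{d-\delta}\Big\}\cup\Big\{\frac{n_j-\gamma}{d-m_j}: z^{n_j}w^{m_j}\text{ a monomial appearing in } q \text{ with nonzero coefficient},\ m_j<d\Big\}\Big).$$ *)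

(* Defs.v *)
From Stdlib Require Import Reals List.
Open Scope R_scope.

Definition CC : Type := (R * R)%type.
Definition Czero : CC := (0, 0).
Definition Cone : CC := (1, 0).
Definition Cadd (u v : CC) : CC := (fst u + fst v, snd u + snd v).
Definition Copp (u : CC) : CC := (- fst u, - snd u).
Definition Csub (u v : CC) : CC := Cadd u (Copp v).
Definition Cmul (u v : CC) : CC :=
  (fst u * fst v - snd u * snd v, fst u * snd v + snd u * fst v).
Definition Cinv (u : CC) : CC :=
  (fst u / (fst u ^ 2 + snd u ^ 2), - snd u / (fst u ^ 2 + snd u ^ 2)).
Definition Cdiv (u v : CC) : CC := Cmul u (Cinv v).
Fixpoint Cpow (u : CC) (n : nat) : CC :=
  match n with O => Cone | S k => Cmul u (Cpow u k) end.
Definition Cmod (u : CC) : R := sqrt (fst u ^ 2 + snd u ^ 2).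

Definition Csum (f : nat -> CC) (n : nat) : CC :=
  fold_right (fun k acc => Cadd (f k) acc) Czero (seq 0 n).

Definition peval (c : nat -> CC) (D : nat) (z : CC) : CC :=
  Csum (fun k => Cmul (c k) (Cpow z k)) (S D).

Definition qeval (a : nat -> nat -> CC) (N d : nat) (z w : CC) : CC :=
  Csum (fun n => Csum (fun m => Cmul (a n m) (Cmul (Cpow z n) (Cpow w m))) (S d)) (S N).

(* alpha = max ({-gamma/(d-delta)} U {(n_j-gamma)/(d-m_j) : a n_j m_j <> 0, m_j < d}) *)
Definition is_alpha (a : nat -> nat -> CC) (d gamma delta : nat) (alpha : R) : Prop :=
  (- INR gamma / (INR d - INR delta) <= alpha) /\
  (forall n m, a n m <> Czero -> (m < d)%nat ->
      (INR n - INR gamma) / (INR d - INR m) <= alpha) /\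
  (alpha = - INR gamma / (INR d - INR delta) \/
   exists n m, a n m <> Czero /\ (m < d)%nat /\
               alpha = (INR n - INR gamma) / (INR d - INR m)).

Definition in_W (alpha Rr : R) (z w : CC) : Prop :=
  Cmod z > Rr /\ Cmod w > Rr * Rpower (Cmod z) alpha.

(* Main.v *)
Require Import Defs.
From Stdlib Require Import Reals List Lra Lia Psatz Arith.
From Coquelicot Require Complex.
Open Scope R_scope.

Definition rsum (g : nat -> R) (l : list nat) : R :=
  fold_right (fun k acc => g k + acc) 0 l.
Definition cfold (f : nat -> CC) (l : list nat) : CC :=
  fold_right (fun k acc => Cadd (f k) acc) Czero l.

Lemma Cmod_mul u v : Cmod (Cmul u v) = Cmod u * Cmod v.
Proof. exact (Coquelicot.Complex.Cmod_mult u v). Qed.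
Lemma Cmod_add u v : Cmod (Cadd u v) <= Cmod u + Cmod v.
Proof. exact (Coquelicot.Complex.Cmod_triangle u v). Qed.
Lemma Cmod_ge0 u : 0 <= Cmod u.
Proof. unfold Cmod; apply sqrt_pos. Qed.
Lemma Cmod_opp u : Cmod (Copp u) = Cmod u.
Proof. destruct u; unfold Cmod, Copp; simpl; f_equal; ring. Qed.
Lemma Cmod_zero : Cmod Czero = 0.
Proof. unfold Cmod, Czero; simpl. replace (0*(0*1)+0*(0*1)) with 0 by ring. apply sqrt_0. Qed.
Lemma Cmod_one : Cmod Cone = 1.
Proof. unfold Cmod, Cone; simpl. replace (1*(1*1)+0*(0*1)) with 1 by ring. apply sqrt_1. Qed.
Lemma Cmod_pow u n : Cmod (Cpow u n) = Cmod u ^ n.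
Proof. induction n; simpl. apply Cmod_one. rewrite Cmod_mul, IHn; ring. Qed.
Lemma Cmod_eq0 u : Cmod u = 0 -> u = Czero.
Proof. intro H. destruct u as [x y]. unfold Cmod in H; simpl in H.
  apply sqrt_eq_0 in H; [|nra]. unfold Czero. f_equal; nra. Qed.

Lemma Cmod_rev1 u v : Cmod u <= Cmod v + Cmod (Csub u v).
Proof. replace u with (Cadd v (Csub u v)) at 1. apply Cmod_add.
  destruct u, v; unfold Cadd, Csub, Copp; simpl; f_equal; ring. Qed.
Lemma Cmod_rev2 u v : Cmod v <= Cmod u + Cmod (Csub u v).
Proof. replace v with (Cadd u (Copp (Csub u v))) at 1. rewrite <- (Cmod_opp (Csub u v)). apply Cmod_add.
  destruct u, v; unfold Cadd, Csub, Copp; simpl; f_equal; ring. Qed.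

Lemma Csub_zero x : Csub x Czero = x.
Proof. destruct x; unfold Csub, Cadd, Copp, Czero; simpl; f_equal; ring. Qed.
Lemma Cmul_one x : Cmul Cone x = x.
Proof. destruct x; unfold Cmul, Cone; simpl; f_equal; ring. Qed.
Lemma Csub_self x : Csub x x = Czero.
Proof. destruct x; unfold Csub, Cadd, Copp, Czero; simpl; f_equal; ring. Qed.

Lemma Cdiv_sub q D : D <> Czero -> Csub (Cdiv q D) Cone = Cdiv (Csub q D) D.
Proof. intro H. destruct q as [a b], D as [x y].
  assert (x^2 + y^2 <> 0).
  { intro E. apply H. unfold Czero. f_equal; nra. }
  unfold Csub, Cdiv, Cmul, Cinv, Cadd, Copp, Cone; simpl; f_equal; field; auto; nra. Qed.

Lemma Cmod_div u v : v <> Czero -> Cmod (Cdiv u v) = Cmod u / Cmod v.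
Proof. intro H. unfold Cdiv. rewrite Cmod_mul. unfold Rdiv. f_equal.
  exact (Coquelicot.Complex.Cmod_inv v H). Qed.

Lemma fold_ext f g l : (forall k, f k = g k) -> cfold f l = cfold g l.
Proof. intro H; induction l; simpl; auto. rewrite IHl, H; auto. Qed.

Lemma cfold_cons f a l : cfold f (a::l) = Cadd (f a) (cfold f l).
Proof. reflexivity. Qed.
Lemma rsum_cons g a l : rsum g (a::l) = g a + rsum g l.
Proof. reflexivity. Qed.

Lemma diff_bound f h l :
  Cmod (Csub (cfold f l) (cfold h l)) <= rsum (fun k => Cmod (Csub (f k) (h k))) l.
Proof. induction l.
  - unfold cfold, rsum; simpl. rewrite Csub_self, Cmod_zero; lra.
  - rewrite !cfold_cons, rsum_cons.
    replace (Csub (Cadd (f a) (cfold f l)) (Cadd (h a) (cfold h l)))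
      with (Cadd (Csub (f a) (h a)) (Csub (cfold f l) (cfold h l))).
    + eapply Rle_trans. apply Cmod_add. lra.
    + destruct (f a), (h a), (cfold f l), (cfold h l); unfold Csub, Cadd, Copp; simpl; f_equal; ring.
Qed.

Lemma rsum_mono g1 g2 l : (forall k, In k l -> g1 k <= g2 k) -> rsum g1 l <= rsum g2 l.
Proof. induction l; simpl; intros H. lra.
  assert (g1 a <= g2 a) by auto. assert (rsum g1 l <= rsum g2 l) by auto. lra. Qed.
Lemma rsum_scal g X l : rsum (fun k => g k * X) l = rsum g l * X.
Proof. induction l; simpl. ring. rewrite IHl; ring. Qed.
Lemma rsum_nonneg g l : (forall k, 0 <= g k) -> 0 <= rsum g l.
Proof. intro H; induction l; simpl. lra. specialize (H a); lra. Qed.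

Lemma delta_zero k0 T s K : (k0 < s)%nat ->
  cfold (fun k => if Nat.eqb k k0 then T else Czero) (seq s K) = Czero.
Proof. revert s; induction K; intros s Hs; simpl. auto.
  destruct (Nat.eqb_spec s k0). lia. rewrite IHK by lia.
  unfold Cadd, Czero; simpl; f_equal; ring. Qed.

Lemma delta_sum k0 T s K : (s <= k0 < s + K)%nat ->
  cfold (fun k => if Nat.eqb k k0 then T else Czero) (seq s K) = T.
Proof. revert s; induction K; intros s Hs; simpl. lia.
  destruct (Nat.eqb_spec s k0).
  - subst. rewrite delta_zero by lia. destruct T; unfold Cadd, Czero; simpl; f_equal; ring.
  - rewrite IHK by lia. destruct T; unfold Cadd, Czero; simpl; f_equal; ring. Qed.

Lemma Rpower_pos x y : 0 < Rpower x y.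
Proof. unfold Rpower; apply exp_pos. Qed.

Lemma key_ineq Z W M alpha (n m g d : nat) :
  1 <= M -> M <= Z -> M <= W / Rpower Z alpha -> (m < d)%nat ->
  (INR n - INR g) / (INR d - INR m) <= alpha ->
  Z ^ n * W ^ m * M <= Z ^ g * W ^ d.
Proof.
  intros HM HZ HW Hmd Hal.
  assert (HZ0 : 0 < Z) by lra.
  pose (P := Rpower Z alpha). assert (HP : 0 < P) by apply Rpower_pos.
  pose (t := W / P). assert (Ht : M <= t) by exact HW.
  assert (HWt : W = t * P) by (unfold t; field; lra).
  assert (Ht0 : 0 < t) by lra.
  assert (HW0 : 0 < W) by (rewrite HWt; nra).
  assert (Hk : INR (d - m) = INR d - INR m) by (apply minus_INR; lia).
  assert (Hk1 : 1 <= INR (d - m)) by (apply (le_INR 1); lia).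
  set (k := INR (d - m)) in *.
  assert (E1 : W ^ d = W ^ m * W ^ (d - m)) by (rewrite <- pow_add; f_equal; lia).
  assert (E2 : W ^ (d - m) = Rpower t k * Rpower Z (alpha * k)).
  { unfold k. rewrite <- Rpower_pow by lra. rewrite HWt.
    rewrite <- Rpower_mult_distr by lra. unfold P. rewrite Rpower_mult. reflexivity. }
  assert (A1 : M <= Rpower t k).
  { apply Rle_trans with (Rpower t 1). rewrite Rpower_1 by lra. lra.
    apply Rle_Rpower; lra. }
  assert (Hnk : INR n - INR g <= alpha * k).
  { replace (INR n - INR g) with ((INR n - INR g) / k * k) by (unfold Rdiv; rewrite Rmult_assoc, Rinv_l; [ring|lra]).
    apply Rmult_le_compat_r; [lra| rewrite Hk; exact Hal]. }
  assert (B1 : Rpower Z (INR n - INR g) <= Rpower Z (alpha * k)).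
  { apply Rle_Rpower; lra. }
  assert (C1 : Z ^ g * Rpower Z (INR n - INR g) = Z ^ n).
  { rewrite <- !Rpower_pow by lra. rewrite <- Rpower_plus. f_equal; ring. }
  assert (Hc : 0 < Rpower Z (INR n - INR g)) by apply Rpower_pos.
  assert (Hzg : 0 < Z ^ g) by (apply pow_lt; lra).
  assert (Hwm : 0 < W ^ m) by (apply pow_lt; lra).
  rewrite E1, E2, <- C1.
  assert (M * Rpower Z (INR n - INR g) <= Rpower t k * Rpower Z (alpha * k)).
  { apply Rmult_le_compat; lra. }
  assert (Z ^ g * W ^ m * (M * Rpower Z (INR n - INR g)) <= Z ^ g * W ^ m * (Rpower t k * Rpower Z (alpha * k))).
  { apply Rmult_le_compat_l; nra. }
  nra.
Qed.

Lemma Csum_cfold f K : Csum f K = cfold f (seq 0 K).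
Proof. reflexivity. Qed.

Lemma q_core (a : nat -> nat -> CC) (N d gamma : nat) (alpha : R)
  (Hsupp : forall n m, (N < n)%nat \/ (d < m)%nat -> a n m = Czero)
  (Hbmonic : a gamma d = Cone)
  (Hbdeg : forall n, (gamma < n)%nat -> a n d = Czero)
  (Hal : forall n m, a n m <> Czero -> (m < d)%nat ->
      (INR n - INR gamma) / (INR d - INR m) <= alpha)
  z w M :
  1 <= M -> M <= Cmod z -> M <= Cmod w / Rpower (Cmod z) alpha ->
  Cmod (Csub (qeval a N d z w) (Cmul (Cpow z gamma) (Cpow w d))) <=
  rsum (fun n => rsum (fun m => Cmod (a n m)) (seq 0 (S d))) (seq 0 (S N)) *
   (Cmod z ^ gamma * Cmod w ^ d / M).
Proof.
  intros HM HZ HW.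
  set (D := Cmul (Cpow z gamma) (Cpow w d)).
  set (X := Cmod z ^ gamma * Cmod w ^ d / M).
  assert (HgN : (gamma <= N)%nat).
  { destruct (le_lt_dec gamma N) as [h|h]; auto.
    assert (a gamma d = Czero) by (apply Hsupp; auto).
    rewrite Hbmonic in H. unfold Cone, Czero in H. injection H; intros; lra. }
  assert (HX : 0 <= X).
  { unfold X. apply Rmult_le_pos. apply Rmult_le_pos; apply pow_le; apply Cmod_ge0.
    left; apply Rinv_0_lt_compat; lra. }
  pose (hh := fun n m => if Nat.eqb m d then (if Nat.eqb n gamma then D else Czero) else Czero).
  assert (HD : cfold (fun n => cfold (hh n) (seq 0 (S d))) (seq 0 (S N)) = D).
  { rewrite (fold_ext _ (fun n => if Nat.eqb n gamma then D else Czero)).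
    apply delta_sum; lia.
    intro n. unfold hh. apply (delta_sum d (if Nat.eqb n gamma then D else Czero)); lia. }
  unfold qeval. rewrite !Csum_cfold.
  pose proof (diff_bound (fun n => Csum (fun m => Cmul (a n m) (Cmul (Cpow z n) (Cpow w m))) (S d))
                (fun n => cfold (hh n) (seq 0 (S d))) (seq 0 (S N))) as H1.
  rewrite HD in H1. eapply Rle_trans; [exact H1|].
  rewrite <- rsum_scal. apply rsum_mono. intros n Hn.
  rewrite Csum_cfold. eapply Rle_trans; [apply diff_bound|].
  rewrite <- rsum_scal. apply rsum_mono. intros m Hm.
  apply in_seq in Hm.
  unfold hh.
  destruct (Nat.eqb_spec m d) as [Emd|Emd]; destruct (Nat.eqb_spec n gamma) as [Eng|Eng].
  - subst. rewrite Hbmonic, Cmul_one. fold D. rewrite Csub_self, Cmod_zero, Cmod_one. nra.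
  - rewrite Csub_zero, !Cmod_mul, !Cmod_pow.
    destruct (Req_dec (Cmod (a n m)) 0) as [Ha|Ha].
    { rewrite Ha. nra. }
    assert (Ha' : a n m <> Czero) by (intro E; apply Ha; rewrite E; apply Cmod_zero).
    assert (Hng : (n < gamma)%nat).
    { destruct (le_lt_dec gamma n) as [h|h]; auto.
      exfalso. apply Ha'. subst m. apply Hbdeg. lia. }
    subst m. apply Rmult_le_compat_l; [apply Cmod_ge0|].
    unfold X. set (Z := Cmod z) in *. set (W := Cmod w).
    assert (Z ^ n * M <= Z ^ gamma).
    { apply Rle_trans with (Z ^ (S n)). simpl. 
      assert (0 <= Z ^ n) by (apply pow_le; lra). nra.
      apply Rle_pow; [lra|lia]. }
    assert (0 <= W ^ d) by (apply pow_le; apply Cmod_ge0).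
    apply (Rmult_le_reg_r M); [lra|]. assert (Ez: forall u, u / M * M = u) by (intro; field; lra). rewrite Ez. nra.
  - rewrite Csub_zero, !Cmod_mul, !Cmod_pow.
    destruct (Req_dec (Cmod (a n m)) 0) as [Ha|Ha].
    { rewrite Ha. nra. }
    assert (Ha' : a n m <> Czero) by (intro E; apply Ha; rewrite E; apply Cmod_zero).
    assert (Hmd : (m < d)%nat) by lia.
    apply Rmult_le_compat_l; [apply Cmod_ge0|].
    pose proof (key_ineq (Cmod z) (Cmod w) M alpha n m gamma d HM HZ HW Hmd (Hal n m Ha' Hmd)).
    unfold X. apply (Rmult_le_reg_r M); [lra|]. assert (Ez: forall u, u / M * M = u) by (intro; field; lra). rewrite Ez. nra.
  - rewrite Csub_zero, !Cmod_mul, !Cmod_pow.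
    destruct (Req_dec (Cmod (a n m)) 0) as [Ha|Ha].
    { rewrite Ha. nra. }
    assert (Ha' : a n m <> Czero) by (intro E; apply Ha; rewrite E; apply Cmod_zero).
    assert (Hmd : (m < d)%nat) by lia.
    apply Rmult_le_compat_l; [apply Cmod_ge0|].
    pose proof (key_ineq (Cmod z) (Cmod w) M alpha n m gamma d HM HZ HW Hmd (Hal n m Ha' Hmd)).
    unfold X. apply (Rmult_le_reg_r M); [lra|]. assert (Ez: forall u, u / M * M = u) by (intro; field; lra). rewrite Ez. nra.
Qed.

Lemma p_core (c : nat -> CC) (delta : nat) (Hpmonic : c delta = Cone) z :
  1 <= Cmod z ->
  Cmod (Csub (peval c delta z) (Cpow z delta)) <=
  rsum (fun k => Cmod (c k)) (seq 0 (S delta)) * (Cmod z ^ delta / Cmod z).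
Proof.
  intros HZ.
  set (X := Cmod z ^ delta / Cmod z).
  assert (HX : 0 <= X).
  { unfold X. apply Rmult_le_pos. apply pow_le; apply Cmod_ge0.
    left; apply Rinv_0_lt_compat; lra. }
  pose (h := fun k => if Nat.eqb k delta then Cpow z delta else Czero).
  assert (HD : cfold h (seq 0 (S delta)) = Cpow z delta) by (apply delta_sum; lia).
  unfold peval. rewrite Csum_cfold.
  pose proof (diff_bound (fun k => Cmul (c k) (Cpow z k)) h (seq 0 (S delta))) as H1.
  rewrite HD in H1. eapply Rle_trans; [exact H1|].
  rewrite <- rsum_scal. apply rsum_mono. intros k Hk. apply in_seq in Hk.
  unfold h. destruct (Nat.eqb_spec k delta).
  - subst. rewrite Hpmonic, Cmul_one, Csub_self, Cmod_zero, Cmod_one. nra.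
  - rewrite Csub_zero, Cmod_mul, Cmod_pow. apply Rmult_le_compat_l; [apply Cmod_ge0|].
    unfold X. set (Z := Cmod z) in *.
    assert (Z ^ k * Z <= Z ^ delta).
    { apply Rle_trans with (Z ^ (S k)). simpl. rewrite Rmult_comm; lra.
      apply Rle_pow; [lra|lia]. }
    apply (Rmult_le_reg_r Z); [lra|].
    replace (Z ^ delta / Z * Z) with (Z ^ delta) by (field; lra). lra.
Qed.

Lemma pow_lt_strict x y n : 0 <= x < y -> (1 <= n)%nat -> x ^ n < y ^ n.
Proof.
  intros H Hn. induction n. lia.
  destruct n. simpl; lra.
  assert (x ^ S n < y ^ S n) by (apply IHn; lia).
  assert (0 <= x ^ S n) by (apply pow_le; lra).
  simpl in *. nra.
Qed.

Theorem lemma5p3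
  (c : nat -> CC) (delta : nat)
  (Hdelta : (2 <= delta)%nat)
  (Hpmonic : c delta = Cone)
  (Hpdeg : forall k, (delta < k)%nat -> c k = Czero)
  (a : nat -> nat -> CC) (N d gamma : nat)
  (Hd : (2 <= d)%nat)
  (Hsupp : forall n m, (N < n)%nat \/ (d < m)%nat -> a n m = Czero)
  (Hbmonic : a gamma d = Cone)
  (Hbdeg : forall n, (gamma < n)%nat -> a n d = Czero)
  (alpha : R) (Halpha : is_alpha a d gamma delta alpha)
  (Hdd : (delta < d)%nat) (Hgamma : (1 <= gamma)%nat) :
  (forall eps, eps > 0 -> exists M, forall z w,
      Cmod z > M -> Cmod w / Rpower (Cmod z) alpha > M ->
      Cmod (Csub (Cdiv (qeval a N d z w) (Cmul (Cpow z gamma) (Cpow w d))) Cone) < eps)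
  /\
  (exists R0, R0 > 0 /\ forall Rr, Rr >= R0 -> forall z w,
      in_W alpha Rr z w -> in_W alpha Rr (peval c delta z) (qeval a N d z w)).
Proof.
  destruct Halpha as [Hal0 [Hal _]].
  set (A := rsum (fun n => rsum (fun m => Cmod (a n m)) (seq 0 (S d))) (seq 0 (S N))).
  assert (HA : 0 <= A).
  { apply rsum_nonneg. intro n. apply rsum_nonneg. intro; apply Cmod_ge0. }
  pose proof (q_core a N d gamma alpha Hsupp Hbmonic Hbdeg Hal) as Hcore.
  fold A in Hcore.
  split.
  - intros eps Heps. set (M := A / eps + 1).
    assert (HM : 1 <= M).
    { unfold M. assert (0 <= A / eps) by (apply Rmult_le_pos; [lra| left; apply Rinv_0_lt_compat; lra]). lra. }
    exists M. intros z w Hz Hw.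
    set (Z := Cmod z) in *. set (W := Cmod w) in *.
    set (P := Rpower Z alpha) in *. assert (HP : 0 < P) by apply Rpower_pos.
    assert (HW : 0 < W).
    { assert (EW : W = W / P * P) by (field; lra). rewrite EW. apply Rmult_lt_0_compat; lra. }
    specialize (Hcore z w M HM (Rlt_le _ _ Hz) (Rlt_le _ _ Hw)).
    fold Z W in Hcore.
    set (D := Cmul (Cpow z gamma) (Cpow w d)) in *.
    assert (HDD : Cmod D = Z ^ gamma * W ^ d) by (unfold D; rewrite Cmod_mul, !Cmod_pow; reflexivity).
    assert (HDpos : 0 < Z ^ gamma * W ^ d) by (apply Rmult_lt_0_compat; apply pow_lt; lra).
    assert (HD0 : D <> Czero) by (intro E; rewrite E, Cmod_zero in HDD; lra).
    rewrite Cdiv_sub by exact HD0. rewrite Cmod_div by exact HD0. rewrite HDD.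
    set (DD := Z ^ gamma * W ^ d) in *.
    assert (Hle : Cmod (Csub (qeval a N d z w) D) / DD <= A / M).
    { apply Rle_trans with (A * (DD / M) / DD).
      apply Rmult_le_compat_r; [left; apply Rinv_0_lt_compat; lra| exact Hcore].
      right; field; lra. }
    assert (A / M < eps).
    { apply (Rmult_lt_reg_r M); [lra|]. replace (A / M * M) with A by (field; lra).
      unfold M. replace (eps * (A / eps + 1)) with (A + eps) by (field; lra). lra. }
    lra.
  - set (Cc := rsum (fun k => Cmod (c k)) (seq 0 (S delta))).
    assert (HCc : 0 <= Cc) by (apply rsum_nonneg; intro; apply Cmod_ge0).
    set (K := Rpower 2 alpha + Rpower (/ 2) alpha).
    assert (HK2 : 0 < Rpower 2 alpha) by apply Rpower_pos.
    assert (HKh : 0 < Rpower (/2) alpha) by apply Rpower_pos.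
    assert (HK : 0 < K) by (unfold K; lra).
    exists (2 + 2 * A + 2 * K + 2 * Cc). split; [lra|].
    intros Rr HR z w [Hz Hw].
    set (Z := Cmod z) in *. set (W := Cmod w) in *.
    set (P := Rpower Z alpha) in *. assert (HP : 0 < P) by apply Rpower_pos.
    assert (HW : 0 < W) by nra.
    pose proof (p_core c delta Hpmonic z ltac:(unfold Z in Hz; lra)) as Hp.
    fold Z Cc in Hp.
    set (Zd := Z ^ delta) in *.
    assert (HZd : 0 < Zd) by (apply pow_lt; lra).
    set (pz := peval c delta z) in *.
    assert (Hpd : Cmod (Csub pz (Cpow z delta)) <= Zd / 2).
    { eapply Rle_trans; [exact Hp|].
      replace (Cc * (Zd / Z)) with (Cc / Z * Zd) by (field; lra).
      replace (Zd / 2) with (/2 * Zd) by field.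
      apply Rmult_le_compat_r; [lra|].
      apply (Rmult_le_reg_r Z); [lra|]. replace (Cc / Z * Z) with Cc by (field; lra). lra. }
    assert (HCz : Cmod (Cpow z delta) = Zd) by (rewrite Cmod_pow; reflexivity).
    pose proof (Cmod_rev1 pz (Cpow z delta)) as Hhi.
    pose proof (Cmod_rev2 pz (Cpow z delta)) as Hlo.
    rewrite HCz in Hhi, Hlo.
    assert (HZ2 : Z ^ 2 <= Zd) by (apply Rle_pow; [lra|lia]).
    split.
    { simpl in HZ2. nra. }
    assert (HRW : Rr <= W / P).
    { apply (Rmult_le_reg_r P); [lra|]. replace (W / P * P) with W by (field; lra). lra. }
    specialize (Hcore z w Rr ltac:(lra) (Rlt_le _ _ Hz) HRW). fold Z W in Hcore.
    set (D := Cmul (Cpow z gamma) (Cpow w d)) in *.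
    assert (HDD : Cmod D = Z ^ gamma * W ^ d) by (unfold D; rewrite Cmod_mul, !Cmod_pow; reflexivity).
    set (DD := Z ^ gamma * W ^ d) in *.
    assert (HDpos : 0 < DD) by (apply Rmult_lt_0_compat; apply pow_lt; lra).
    set (qz := qeval a N d z w) in *.
    assert (Hqd : Cmod (Csub qz D) <= DD / 2).
    { eapply Rle_trans; [exact Hcore|].
      replace (A * (DD / Rr)) with (A / Rr * DD) by (field; lra).
      replace (DD / 2) with (/2 * DD) by field.
      apply Rmult_le_compat_r; [lra|].
      apply (Rmult_le_reg_r Rr); [lra|]. replace (A / Rr * Rr) with A by (field; lra). lra. }
    pose proof (Cmod_rev2 qz D) as Hqlo. rewrite HDD in Hqlo. fold DD in Hqlo.
    set (E := Rpower Z (INR delta * alpha)).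
    assert (HE : 0 < E) by apply Rpower_pos.
    assert (HZdE : Rpower Zd alpha = E).
    { unfold Zd, E. rewrite <- Rpower_pow by lra. rewrite Rpower_mult. reflexivity. }
    set (pm := Cmod pz) in *.
    assert (Hpm : 0 < pm) by lra.
    assert (Hpa : Rpower pm alpha <= K * E).
    { destruct (Rle_lt_dec 0 alpha) as [Hal1|Hal1].
      - apply Rle_trans with (Rpower (2 * Zd) alpha).
        apply Rle_Rpower_l; lra.
        rewrite <- Rpower_mult_distr by lra. rewrite HZdE. unfold K. nra.
      - apply Rle_trans with (Rpower (Zd * / 2) alpha).
        + assert (Hinv : forall x, Rpower x alpha = / Rpower x (- alpha))
            by (intro x; rewrite <- Rpower_Ropp, Ropp_involutive; reflexivity).
          rewrite (Hinv pm), (Hinv (Zd * / 2)). apply Rinv_le_contravar. apply Rpower_pos.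
          apply Rle_Rpower_l; lra.
        + rewrite <- Rpower_mult_distr by lra. rewrite HZdE. unfold K. nra. }
    assert (HWd : (Rr * P) ^ d < W ^ d).
    { apply pow_lt_strict; [split; [nra|lra]|lia]. }
    assert (HPd : P ^ d = Rpower Z (alpha * INR d)).
    { unfold P. rewrite <- Rpower_pow by apply Rpower_pos. rewrite Rpower_mult. reflexivity. }
    rewrite Rpow_mult_distr, HPd in HWd.
    assert (Hexp : 0 <= INR gamma + alpha * (INR d - INR delta)).
    { assert (Hdlt : INR delta < INR d) by (apply lt_INR; lia).
      assert (- INR gamma <= alpha * (INR d - INR delta)).
      { replace (- INR gamma) with (- INR gamma / (INR d - INR delta) * (INR d - INR delta)) by (field; lra).
        apply Rmult_le_compat_r; lra. }
      lra. }
    assert (HZg : Z ^ gamma * Rpower Z (alpha * INR d) >= E).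
    { rewrite <- Rpower_pow by lra. rewrite <- Rpower_plus.
      replace (INR gamma + alpha * INR d) with (INR delta * alpha + (INR gamma + alpha * (INR d - INR delta))) by ring.
      rewrite Rpower_plus. fold E.
      assert (1 <= Rpower Z (INR gamma + alpha * (INR d - INR delta))).
      { rewrite <- (Rpower_O Z) by lra. apply Rle_Rpower; lra. }
      nra. }
    assert (HZg0 : 0 < Z ^ gamma) by (apply pow_lt; lra).
    assert (HDDb : Rr ^ d * E < DD).
    { unfold DD. assert (0 <= Rr ^ d) by (apply pow_le; lra).
      assert (Rr ^ d * E <= Z ^ gamma * (Rr ^ d * Rpower Z (alpha * INR d))) by nra.
      assert (Z ^ gamma * (Rr ^ d * Rpower Z (alpha * INR d)) < Z ^ gamma * W ^ d)
        by (apply Rmult_lt_compat_l; lra).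
      lra. }
    assert (HRd : 2 * K * Rr <= Rr ^ d).
    { apply Rle_trans with (Rr ^ 2). simpl. nra. apply Rle_pow; [lra|lia]. }
    assert (Rr * Rpower pm alpha <= Rr * (K * E)) by (apply Rmult_le_compat_l; lra).
    assert (2 * K * Rr * E <= Rr ^ d * E) by (apply Rmult_le_compat_r; lra).
    unfold pm in *. lra.
Qed.
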